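(* Let $A\in\mathbb{R}^{n\times n}$ with $A\ge 0$, $B\in\mathbb{R}^{n\times m}$, $C\in\mathbb{R}^{p\times n}$. For gains $\overline{K},\underline{K}\in\mathbb{R}^{m\times n}$ and $\overline{L},\underline{L}\in\mathbb{R}^{n\times p}$ let \[ M=\begin{bmatrix} A & B\overline{K} & B\underline{K} \\ \overline{L}C & A-\overline{L}C+B\overline{K} & B\underline{K} \\ \underline{L}C & B\overline{K} & A-\underline{L}C+B\underline{K} \end{bmatrix} \] and $\mathcal{X}=\{(x,\overline{x},\underline{x}) : x,\overline{x},\underline{x}\in\mathbb{R}^n_+,\ \underline{x}\le x\le \overline{x}\}$. The following statements are equivalent: (i) There exist $K\in\mathbb{R}^{m\times n}$ and $L\in\mathbb{R}^{n\times p}$ such that $A-LC$ and $A+BK$ are Schur, $A-LC\ge 0$, $A+BK\ge0$ and $LC\ge 0$. (ii) There exist gains $\overline{K},\underline{K},\overline{L},\underline{L}$ with $\underline{L}C\ge 0$ such that $M$ is Schur (i.e., the closed-loop system $(x,\overline{x},\underline{x})(t+1)=M(x,\overline{x},\underline{x})(t)$ is asymptotically stable) and $\mathcal{X}$ is invariant under $(x,\overline{x},\underline{x})(t+1)=M(x,\overline{x},\underline{x})(t)$.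
   Context: All inequalities between matrices or vectors are element-wise; $\mathbb{R}^n_+$ is the closed nonnegative orthant. A square matrix is Schur if its spectral radius is less than $1$. The matrix $M$ is the closed-loop matrix of the system $x(t+1)=Ax(t)+Bu(t)$, $y(t)=Cx(t)$ with upper and lower Luenberger observers $\overline{x}(t+1)=(A-\overline{L}C)\overline{x}(t)+\overline{L}y(t)+Bu(t)$, $\underline{x}(t+1)=(A-\underline{L}C)\underline{x}(t)+\underline{L}y(t)+Bu(t)$ and feedback $u(t)=\underline{K}\,\underline{x}(t)+\overline{K}\,\overline{x}(t)$. Invariance of $\mathcal{X}$ means every trajectory starting in $\mathcal{X}$ stays in $\mathcal{X}$ for all $t\ge0$. *)

(* Defs.v *)
(* real matrices over an arbitrary real closed field R
   (the reals are one instance); complex eigenvalues live in R[i]. *)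
From HB Require Import structures.
From mathcomp Require Import all_boot all_order all_algebra.
From mathcomp Require Import complex.
Set Implicit Arguments. Unset Strict Implicit. Unset Printing Implicit Defensive.
Import Order.TTheory GRing.Theory Num.Theory.
Local Open Scope ring_scope.

Definition mxle (R : numDomainType) (m n : nat) (A B : 'M[R]_(m, n)) : Prop :=
  forall i j, A i j <= B i j.

Definition mx_nneg (R : numDomainType) (m n : nat) (A : 'M[R]_(m, n)) : Prop :=
  mxle 0 A.

Definition schur (R : rcfType) (n : nat) (A : 'M[R]_n) : Prop :=
  forall z : R[i], eigenvalue (map_mx (real_complex R) A) z -> `|z| < 1.

(* Closed-loop matrix M, state ordered as (x, xbar, xund). *)
Definition closed_loop (R : rcfType) (n m p : nat)
  (A : 'M[R]_n) (B : 'M[R]_(n, m)) (C : 'M[R]_(p, n))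
  (Kb Ku : 'M[R]_(m, n)) (Lb Lu : 'M[R]_(n, p)) : 'M[R]_(n + (n + n)) :=
  block_mx A (row_mx (B *m Kb) (B *m Ku))
           (col_mx (Lb *m C) (Lu *m C))
           (block_mx (A - Lb *m C + B *m Kb) (B *m Ku)
                     (B *m Kb) (A - Lu *m C + B *m Ku)).

Definition in_X (R : rcfType) (n : nat) (z : 'cV[R]_(n + (n + n))) : Prop :=
  let x := usubmx z in
  let xb := usubmx (dsubmx z) in
  let xu := dsubmx (dsubmx z) in
  [/\ mx_nneg x, mx_nneg xb, mx_nneg xu, mxle xu x & mxle x xb].

Definition traj (R : rcfType) (N : nat) (M : 'M[R]_N) (z0 : 'cV[R]_N) (t : nat)
  : 'cV[R]_N := iter t (fun z => M *m z) z0.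

Definition X_invariant (R : rcfType) (n : nat) (M : 'M[R]_(n + (n + n))) : Prop :=
  forall z0, in_X z0 -> forall t, in_X (traj M z0 t).

(* Main.v *)
Require Import Defs.
From HB Require Import structures.
From mathcomp Require Import all_boot all_order all_algebra.
From mathcomp Require Import complex ring.
Import Order.TTheory GRing.Theory Num.Theory.
Local Open Scope ring_scope.


Lemma schur_charE (R : rcfType) n (M : 'M[R]_n) :
  schur M <-> forall z : R[i], root (map_poly (real_complex R) (char_poly M)) z -> `|z| < 1.
Proof.
rewrite /schur; split=> H z; have := H z;
  by rewrite eigenvalue_root_char map_char_poly.
Qed.

Lemma schur_split (R : rcfType) n1 n2 n (M : 'M[R]_n) (P : 'M[R]_n1) (S : 'M[R]_n2) :
  char_poly M = char_poly P * char_poly S ->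
  schur M <-> schur P /\ schur S.
Proof.
move=> E; rewrite !schur_charE E rmorphM /=; split.
  by move=> H; split=> z Hz; apply: H; rewrite rootM Hz ?orbT.
by move=> [H1 H2] z; rewrite rootM => /orP[]; [apply: H1|apply: H2].
Qed.

Lemma char_poly_ublock (R : comNzRingType) n1 n2 (P : 'M[R]_n1) (Q : 'M[R]_(n1,n2)) (S : 'M[R]_n2) :
  char_poly (block_mx P Q 0 S) = char_poly P * char_poly S.
Proof.
rewrite /char_poly /char_poly_mx map_block_mx scalar_mx_block opp_block_mx add_block_mx.
by rewrite map_mx0 oppr0 addr0 det_ublock.
Qed.

Lemma char_poly_sim (R : comNzRingType) n (M N T : 'M[R]_n) :
  T *m M = N *m T -> \det T = 1 -> char_poly M = char_poly N.
Proof.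
move=> E dT.
have : char_poly_mx N *m map_mx polyC T = map_mx polyC T *m char_poly_mx M.
  rewrite /char_poly_mx mulmxBl mulmxBr -!map_mxM E; congr (_ - _).
  by rewrite scalar_mxC.
move/(congr1 determinant); rewrite !det_mulmx det_map_mx dT /= ?polyC1 mulr1 mul1r.
by rewrite /char_poly => ->.
Qed.

Lemma cl_char (R : rcfType) (n m p : nat)
  (A : 'M[R]_n) (B : 'M[R]_(n, m)) (C : 'M[R]_(p, n))
  (Kb Ku : 'M[R]_(m, n)) (Lb Lu : 'M[R]_(n, p)) :
  char_poly (closed_loop A B C Kb Ku Lb Lu) =
  char_poly (A + B *m (Kb + Ku)) * (char_poly (A - Lb *m C) * char_poly (A - Lu *m C)).
Proof.
rewrite -(@char_poly_ublock _ _ _ (A - Lb *m C) 0 (A - Lu *m C)) -(@char_poly_ublock _ _ _ _ (row_mx (B *m Kb) (B *m Ku))).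
apply: (@char_poly_sim _ _ _ _ (block_mx 1%:M 0 (col_mx (-1%:M) (-1%:M)) 1%:M)); last first.
  by rewrite det_lblock !det1 mulr1.
rewrite /closed_loop !mulmx_block !mul1mx !mulmx1 !mul0mx !mulmx0 !addr0 !add0r.
congr block_mx.
- by rewrite mul_row_col !mulmxN !mulmx1 mulmxDr -opprD addrK.
- rewrite mul_col_mx mul_block_col !mulmxN !mulNmx !mul1mx !mulmx1 ?mul0mx ?mulmx0 ?oppr0 ?addr0 ?add0r add_col_mx.
  by rewrite !opprB !(addrC (- A)).
- rewrite mul_col_row !mulNmx !mul1mx add_block_mx.
  by rewrite !addNr (addrC (- (B *m Kb))) (addrC (- (B *m Ku))) !addrK.
Qed.

Section Nneg.
Variable R : rcfType.

Lemma nnegP m n (a : 'M[R]_(m,n)) : mx_nneg a <-> forall i j, 0 <= a i j.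
Proof. by split=> h i j; have := h i j; rewrite mxE. Qed.

Lemma nneg0 m n : mx_nneg (0 : 'M[R]_(m,n)).
Proof. by apply/nnegP=> i j; rewrite mxE. Qed.

Lemma nnegD m n (a b : 'M[R]_(m,n)) : mx_nneg a -> mx_nneg b -> mx_nneg (a + b).
Proof. by move=> /nnegP ha /nnegP hb; apply/nnegP=> i j; rewrite mxE addr_ge0. Qed.

Lemma nnegM m n k (a : 'M[R]_(m,n)) (b : 'M[R]_(n,k)) :
  mx_nneg a -> mx_nneg b -> mx_nneg (a *m b).
Proof.
move=> /nnegP ha /nnegP hb; apply/nnegP=> i j; rewrite mxE.
by apply: sumr_ge0 => l _; rewrite mulr_ge0.
Qed.

Lemma mxleE m n (a b : 'M[R]_(m,n)) : mxle a b <-> mx_nneg (b - a).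
Proof.
split=> h i j; have := h i j; rewrite !mxE; first by rewrite subr_ge0.
by rewrite subr_ge0.
Qed.

Lemma nneg_col m n (P : 'M[R]_(m,n)) :
  (forall v : 'cV[R]_n, mx_nneg v -> mx_nneg (P *m v)) -> mx_nneg P.
Proof.
move=> h; apply/nnegP=> i j.
have hd : mx_nneg (delta_mx j 0 : 'cV[R]_n).
  by apply/nnegP=> a b; rewrite mxE; case: (_ && _).
have /nnegP H := h _ hd.
by have := H i 0; rewrite -colE mxE.
Qed.
End Nneg.

Section Main.
Variables (R : rcfType) (n m p : nat)
  (A : 'M[R]_n) (B : 'M[R]_(n, m)) (C : 'M[R]_(p, n)).

Lemma cl_schur (Kb Ku : 'M[R]_(m, n)) (Lb Lu : 'M[R]_(n, p)) :
  schur (closed_loop A B C Kb Ku Lb Lu) <->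
  [/\ schur (A + B *m (Kb + Ku)), schur (A - Lb *m C) & schur (A - Lu *m C)].
Proof.
have E : char_poly (closed_loop A B C Kb Ku Lb Lu) = char_poly (A + B *m (Kb + Ku)) *
   char_poly (block_mx (A - Lb *m C) 0 0 (A - Lu *m C)).
  by rewrite cl_char char_poly_ublock.
rewrite (@schur_split _ _ _ _ _ _ _ E).
rewrite (@schur_split _ _ _ _ _ _ _ (@char_poly_ublock _ _ _ (A - Lb *m C) 0 (A - Lu *m C))).
by split=> [[? [? ?]]|[? ? ?]].
Qed.

Lemma in_X_col (x xb xu : 'cV[R]_n) :
  in_X (col_mx x (col_mx xb xu)) <->
  [/\ mx_nneg x, mx_nneg xb, mx_nneg xu, mxle xu x & mxle x xb].
Proof. by rewrite /in_X /= !col_mxKd !col_mxKu. Qed.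

Lemma cl_mul (Kb Ku : 'M[R]_(m, n)) (Lb Lu : 'M[R]_(n, p)) (x xb xu : 'cV[R]_n) :
  closed_loop A B C Kb Ku Lb Lu *m col_mx x (col_mx xb xu) =
  col_mx (A *m x + B *m Kb *m xb + B *m Ku *m xu)
    (col_mx (Lb *m C *m x + (A - Lb *m C + B *m Kb) *m xb + B *m Ku *m xu)
            (Lu *m C *m x + B *m Kb *m xb + (A - Lu *m C + B *m Ku) *m xu)).
Proof.
rewrite /closed_loop mul_block_col mul_row_col mul_col_mx mul_block_col add_col_mx.
by rewrite !addrA.
Qed.

Lemma X_inv_step (M : 'M[R]_(n + (n + n))) :
  (forall z, in_X z -> in_X (M *m z)) -> X_invariant M.
Proof.
move=> h z0 Hz; elim=> [//|t IH].
by rewrite /traj iterS; apply: h.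
Qed.

Lemma col3 (z : 'cV[R]_(n + (n + n))) :
  z = col_mx (usubmx z) (col_mx (usubmx (dsubmx z)) (dsubmx (dsubmx z))).
Proof. by rewrite !vsubmxK. Qed.

End Main.

Ltac zmodmx := repeat match goal with |- context [mulmx ?X ?Y] =>
   let a := fresh "a" in move: (mulmx X Y) => a end;
   apply/matrixP=> i j; rewrite !mxE; ring.

Theorem theorem1 (R : rcfType) (n m p : nat)
  (A : 'M[R]_n) (B : 'M[R]_(n, m)) (C : 'M[R]_(p, n)) :
  mx_nneg A ->
  ((exists (K : 'M[R]_(m, n)) (L : 'M[R]_(n, p)),
      [/\ schur (A - L *m C), schur (A + B *m K),
          mx_nneg (A - L *m C), mx_nneg (A + B *m K) & mx_nneg (L *m C)])
   <->
   (exists (Kb Ku : 'M[R]_(m, n)) (Lb Lu : 'M[R]_(n, p)),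
      [/\ mx_nneg (Lu *m C),
          schur (closed_loop A B C Kb Ku Lb Lu)
        & X_invariant (closed_loop A B C Kb Ku Lb Lu)])).
Proof.
move=> nA; split.
  case=> K [L] [sL sK nL nK nLC]; exists 0, K, L, L; split => //.
    by apply/cl_schur; rewrite add0r; split.
  apply: X_inv_step => z; rewrite [z]col3 cl_mul !in_X_col.
  move: (usubmx z) (usubmx (dsubmx z)) (dsubmx (dsubmx z)) => x xb xu.
  case=> nx nxb nxu /mxleE lxu /mxleE lxb.
  rewrite !mulmx0 !mul0mx !addr0.
  have ex' : A *m x + B *m K *m xu = (A + B *m K) *m xu + A *m (x - xu).
    by rewrite ?(mulmxDl, mulmxDr, mulmxBl, mulmxBr, mulNmx, mulmxN); zmodmx.
  have exu' : L *m C *m x + (A - L *m C + B *m K) *m xu =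
     (A + B *m K) *m xu + L *m C *m (x - xu).
    by rewrite ?(mulmxDl, mulmxDr, mulmxBl, mulmxBr, mulNmx, mulmxN); zmodmx.
  have ed1 : A *m x + B *m K *m xu - (L *m C *m x + (A - L *m C + B *m K) *m xu)
     = (A - L *m C) *m (x - xu).
    by rewrite ?(mulmxDl, mulmxDr, mulmxBl, mulmxBr, mulNmx, mulmxN); zmodmx.
  have ed2 : L *m C *m x + (A - L *m C) *m xb + B *m K *m xu - (A *m x + B *m K *m xu)
     = (A - L *m C) *m (xb - x).
    by rewrite ?(mulmxDl, mulmxDr, mulmxBl, mulmxBr, mulNmx, mulmxN); zmodmx.
  have hx' : mx_nneg (A *m x + B *m K *m xu).
    by rewrite ex'; apply: nnegD; apply: nnegM.
  split.
  - exact: hx'.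
  - rewrite -[X in mx_nneg X](subrK (A *m x + B *m K *m xu)) ed2.
    by apply: nnegD => //; apply: nnegM.
  - by rewrite exu'; apply: nnegD; apply: nnegM.
  - by apply/mxleE; rewrite ed1; apply: nnegM.
  - by apply/mxleE; rewrite ed2; apply: nnegM.
case=> Kb [Ku] [Lb] [Lu] [nLC /cl_schur [sK sLb sLu] inv].
exists (Kb + Ku), Lu; split => //.
  apply: nneg_col => v hv.
  have hz : in_X (col_mx v (col_mx v 0)).
    apply/in_X_col; split => //; try exact: nneg0; apply/mxleE; rewrite ?subr0 ?subrr //; exact: nneg0.
  have := inv _ hz 1.
  rewrite /traj /= cl_mul !in_X_col.
  case=> _ _ _ /mxleE h _; move: h.
  rewrite !mulmx0 !addr0.
  suff -> : (A - Lu *m C) *m v = A *m v + B *m Kb *m v - (Lu *m C *m v + B *m Kb *m v) by [].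
  by rewrite ?(mulmxDl, mulmxDr, mulmxBl, mulmxBr, mulNmx, mulmxN); zmodmx.
apply: nneg_col => v hv.
have hz : in_X (col_mx v (col_mx v v)).
  apply/in_X_col; split => //; apply/mxleE; rewrite ?subrr; exact: nneg0.
have := inv _ hz 1.
rewrite /traj /= cl_mul !in_X_col.
case=> h _ _ _ _; move: h.
suff -> : (A + B *m (Kb + Ku)) *m v = A *m v + B *m Kb *m v + B *m Ku *m v by [].
by rewrite mulmxDl mulmxDr !mulmxDl addrA.
Qed.
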